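(* Let $n\in\mathbb{N}$ and consider the equation $q_nx^n+\cdots+q_1x+q_0=0$ in the unknown $x\in\mathbb{H}$, with $q_n\neq 0$. (a) Suppose all $q_i$ are real, and the solution set of the equation in $\mathbb{C}$ is $\{\xi_1,\ldots,\xi_s,\zeta_1,\overline{\zeta_1},\ldots,\zeta_t,\overline{\zeta_t}\}$, where $\xi_1,\ldots,\xi_s$ are distinct real numbers and $\zeta_1,\ldots,\zeta_t$ are distinct nonreal complex numbers. Then the solution set in $\mathbb{H}$ is $\{\xi_1,\ldots,\xi_s\}\cup[\zeta_1]\cup\cdots\cup[\zeta_t]$. (b) More generally, suppose all $q_i$ are complex numbers and the solution set of the equation in $\mathbb{C}$ is $\{\xi_1,\ldots,\xi_s,\eta_1,\ldots,\eta_k,\zeta_1,\overline{\zeta_1},\ldots,\zeta_t,\overline{\zeta_t}\}$, where $\xi_1,\ldots,\xi_s$ are distinct real numbers, $\eta_1,\ldots,\eta_k,\zeta_1,\ldots,\zeta_t$ are distinct nonreal complex numbers, and no $\overline{\eta_i}$ is a root of the equation. Then the solution set in $\mathbb{H}$ is $\{\xi_1,\ldots,\xi_s,\eta_1,\ldots,\eta_k\}\cup[\zeta_1]\cup\cdots\cup[\zeta_t]$. (c) Let $p_1,\ldots,p_n\in\mathbb{H}$ with $p_n\neq0$, $d_0\in\{0,1\}$, and let $f_1,f_2,\bar f_1,\bar f_2$ be the derived polynomials of the equation $p_nx^n+\cdots+p_1x+d_0=0$. Then this equation has only finitely many solutions in $\mathbb{H}$ if and only if the complex polynomial $\gcd(f_1,f_2,\bar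 f_1,\bar f_2)$ has no nonreal complex root, if and only if the complex polynomial $\gcd(f_1,f_2)$ has no pair of nonreal conjugate complex roots (i.e., there is no nonreal $c\in\mathbb{C}$ with $c$ and $\bar c$ both roots of $\gcd(f_1,f_2)$).
   Context: $\mathbb{H}$ denotes the real quaternions with units $\mathbf{i},\mathbf{j},\mathbf{k}$, and $\mathbb{C}=\mathbb{R}\oplus\mathbb{R}\mathbf{i}\subset\mathbb{H}$. For $q\in\mathbb{H}$, $[q]=\{aqa^{-1}:a\in\mathbb{H},a\neq0\}$. Derived polynomials: writing $p_i=t_1^{(i)}+t_2^{(i)}\mathbf{j}$ with $t_1^{(i)},t_2^{(i)}\in\mathbb{C}$, set $f_1(t)=t_1^{(n)}t^n+\cdots+t_1^{(1)}t+d_0$, $f_2(t)=t_2^{(n)}t^n+\cdots+t_2^{(1)}t$, $\bar f_1(t)=\overline{t_1^{(n)}}t^n+\cdots+\overline{t_1^{(1)}}t+d_0$, $\bar f_2(t)=\overline{t_2^{(n)}}t^n+\cdots+\overline{t_2^{(1)}}t$, regarded as polynomials in $\mathbb{C}[t]$. *)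

(* Defs.v *)
From HB Require Import structures.
From mathcomp Require Import all_boot all_order all_algebra.
From mathcomp Require Import reals.
From mathcomp Require Import complex.
Set Implicit Arguments. Unset Strict Implicit. Unset Printing Implicit Defensive.
Import Order.TTheory GRing.Theory Num.Theory.
Local Open Scope ring_scope.

(* Quaternion a + b i + c j + d k *)
Record quat (R : Type) : Type := Quat { qa : R; qb : R; qc : R; qd : R }.

Definition seq_of_quat (R : Type) (x : quat R) := [:: qa x; qb x; qc x; qd x].
Definition quat_of_seq (R : Type) (s : seq R) :=
  if s is [:: a; b; c; d] then Some (Quat a b c d) else None.
Lemma seq_of_quatK (R : Type) : pcancel (@seq_of_quat R) (@quat_of_seq R).
Proof. by case. Qed.
HB.instance Definition _ (R : eqType) := Equality.copy (quat R)
  (pcan_type (@seq_of_quatK R)).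
HB.instance Definition _ (R : choiceType) := Choice.copy (quat R)
  (pcan_type (@seq_of_quatK R)).

Section Quat.
Variable R : realType.

Definition qzero : quat R := Quat 0 0 0 0.
Definition qone : quat R := Quat 1 0 0 0.
Definition qadd (x y : quat R) : quat R :=
  Quat (qa x + qa y) (qb x + qb y) (qc x + qc y) (qd x + qd y).
(* Hamilton product, i^2 = j^2 = k^2 = ijk = -1 *)
Definition qmul (x y : quat R) : quat R :=
  Quat (qa x * qa y - qb x * qb y - qc x * qc y - qd x * qd y)
       (qa x * qb y + qb x * qa y + qc x * qd y - qd x * qc y)
       (qa x * qc y - qb x * qd y + qc x * qa y + qd x * qb y)
       (qa x * qd y + qb x * qc y - qc x * qb y + qd x * qa y).
Definition qnorm2 (x : quat R) : R :=
  qa x ^+ 2 + qb x ^+ 2 + qc x ^+ 2 + qd x ^+ 2.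
Definition qinv (x : quat R) : quat R :=
  let n := qnorm2 x in
  Quat (qa x / n) (- qb x / n) (- qc x / n) (- qd x / n).
Definition qpow (x : quat R) (i : nat) : quat R := iter i (qmul x) qone.

Definition qofR (r : R) : quat R := Quat r 0 0 0.
Definition qofC (z : R[i]) : quat R := Quat (complex.Re z) (complex.Im z) 0 0.

(* value of  q_n x^n + ... + q_1 x + q_0  (coefficients on the left) *)
Definition qeval (q : nat -> quat R) (n : nat) (x : quat R) : quat R :=
  foldr qadd qzero [seq qmul (q i) (qpow x i) | i <- iota 0 n.+1].

Definition qclass (q : quat R) : quat R -> Prop :=
  fun x => exists a : quat R, a <> qzero /\ x = qmul (qmul a q) (qinv a).

(* p = t1 + t2 j with t1, t2 in C *)
Definition qt1 (p : quat R) : R[i] := Complex (qa p) (qb p).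
Definition qt2 (p : quat R) : R[i] := Complex (qc p) (qd p).

Definition derf1 (p : nat -> quat R) (n : nat) (d0 : R) : {poly R[i]} :=
  \poly_(i < n.+1) (if i == 0%N then d0%:C%C else qt1 (p i)).
Definition derf2 (p : nat -> quat R) (n : nat) : {poly R[i]} :=
  \poly_(i < n.+1) (if i == 0%N then 0 else qt2 (p i)).
Definition derf1bar (p : nat -> quat R) (n : nat) (d0 : R) : {poly R[i]} :=
  \poly_(i < n.+1) (if i == 0%N then d0%:C%C else conjc (qt1 (p i))).
Definition derf2bar (p : nat -> quat R) (n : nat) : {poly R[i]} :=
  \poly_(i < n.+1) (if i == 0%N then 0 else conjc (qt2 (p i))).

End Quat.

(* Main.v *)
Require Import Defs.
From HB Require Import structures.
From mathcomp Require Import all_boot all_order all_algebra.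
From mathcomp Require Import reals.
From mathcomp Require Import complex.
From mathcomp Require Import ring lra zify.
Set Implicit Arguments. Unset Strict Implicit. Unset Printing Implicit Defensive.
Import Order.TTheory GRing.Theory Num.Theory.
Local Open Scope ring_scope.
Local Open Scope complex_scope.

Section Q.
Variable R : realType.
Local Notation Q := (quat R).

Lemma quat_eq (x y : Q) : qa x = qa y -> qb x = qb y -> qc x = qc y -> qd x = qd y -> x = y.
Proof. by case: x => ????; case: y => ???? /= -> -> -> ->. Qed.

Fixpoint gd (a N : R) (i : nat) : R * R :=
  if i is i'.+1 then (- (N * (gd a N i').2), (gd a N i').1 + 2 * a * (gd a N i').2)
  else (1, 0).

Lemma qpowE (x : Q) i : qpow x i =
  Quat ((gd (qa x) (qnorm2 x) i).1 + (gd (qa x) (qnorm2 x) i).2 * qa x)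
       ((gd (qa x) (qnorm2 x) i).2 * qb x)
       ((gd (qa x) (qnorm2 x) i).2 * qc x)
       ((gd (qa x) (qnorm2 x) i).2 * qd x).
Proof.
elim: i => [|i IH]; first by apply: quat_eq => /=; ring.
rewrite /qpow /= -/(qpow x i) IH.
by apply: quat_eq; rewrite /= /qnorm2; ring.
Qed.

Lemma cpowE (w : R[i]) a N i : w * w = (2 * a)%:C * w - N%:C ->
  w ^+ i = ((gd a N i).1)%:C + ((gd a N i).2)%:C * w.
Proof.
move=> ww; elim: i => [|i IH]; first by rewrite expr0 /= mul0r addr0.
rewrite exprS IH /= mulrDr mulrCA ww.
rewrite !rmorphD !rmorphM !rmorphN /=. 
rewrite (_ : (2%:C : R[i]) = 2); last by rewrite rmorphD rmorph1.
ring.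
Qed.


Definition Gv (q : nat -> Q) n a N : Q :=
  Quat (\sum_(i < n.+1) (gd a N i).1 * qa (q i)) (\sum_(i < n.+1) (gd a N i).1 * qb (q i))
       (\sum_(i < n.+1) (gd a N i).1 * qc (q i)) (\sum_(i < n.+1) (gd a N i).1 * qd (q i)).
Definition Dv (q : nat -> Q) n a N : Q :=
  Quat (\sum_(i < n.+1) (gd a N i).2 * qa (q i)) (\sum_(i < n.+1) (gd a N i).2 * qb (q i))
       (\sum_(i < n.+1) (gd a N i).2 * qc (q i)) (\sum_(i < n.+1) (gd a N i).2 * qd (q i)).

Lemma foldr_qadd (s : seq Q) :
  foldr (@qadd R) (qzero R) s = Quat (\sum_(y <- s) qa y) (\sum_(y <- s) qb y)
     (\sum_(y <- s) qc y) (\sum_(y <- s) qd y).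
Proof.
elim: s => [|y s IH]; first by rewrite !big_nil.
by rewrite /= IH !big_cons.
Qed.

Ltac comb := repeat (rewrite -big_split /= || rewrite -sumrB /=).

Lemma qevalE q n x : qeval q n x =
  qadd (Gv q n (qa x) (qnorm2 x)) (qmul (Dv q n (qa x) (qnorm2 x)) x).
Proof.
have E : iota 0 n.+1 = index_iota 0 n.+1 by rewrite /index_iota subn0.
rewrite /qeval foldr_qadd !big_map E !big_mkord.
apply: quat_eq; rewrite /= !mulr_suml; comb; apply: eq_bigr => i _;
  rewrite qpowE /=; ring.
Qed.


Lemma mulCr (a b g : R) : Complex a b * g%:C = Complex (g*a) (g*b).
Proof. by apply/eqP; rewrite eq_complex /=; apply/andP; split; apply/eqP; ring. Qed.

Lemma sumC m (u v : 'I_m -> R) :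
  \sum_(i < m) Complex (u i) (v i) = Complex (\sum_(i < m) u i) (\sum_(i < m) v i).
Proof.
elim: m u v => [|m IH] u v; first by rewrite !big_ord0.
by rewrite !big_ord_recr /= IH.
Qed.

Lemma ceval1 (q : nat -> Q) n (w : R[i]) a N : w * w = (2 * a)%:C * w - N%:C ->
  \sum_(i < n.+1) qt1 (q i) * w ^+ i =
  Complex (qa (Gv q n a N)) (qb (Gv q n a N)) + Complex (qa (Dv q n a N)) (qb (Dv q n a N)) * w.
Proof.
move=> ww.
rewrite (eq_bigr (fun i : 'I_n.+1 => Complex ((gd a N i).1 * qa (q i)) ((gd a N i).1 * qb (q i))
   + Complex ((gd a N i).2 * qa (q i)) ((gd a N i).2 * qb (q i)) * w)); last first.
  by move=> i _; rewrite (cpowE i ww) mulrDr mulrA -!mulCr.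
by rewrite big_split /= -mulr_suml !sumC.
Qed.

Lemma ceval2 (q : nat -> Q) n (w : R[i]) a N : w * w = (2 * a)%:C * w - N%:C ->
  \sum_(i < n.+1) qt2 (q i) * w ^+ i =
  Complex (qc (Gv q n a N)) (qd (Gv q n a N)) + Complex (qc (Dv q n a N)) (qd (Dv q n a N)) * w.
Proof.
move=> ww.
rewrite (eq_bigr (fun i : 'I_n.+1 => Complex ((gd a N i).1 * qc (q i)) ((gd a N i).1 * qd (q i))
   + Complex ((gd a N i).2 * qc (q i)) ((gd a N i).2 * qd (q i)) * w)); last first.
  by move=> i _; rewrite (cpowE i ww) mulrDr mulrA -!mulCr.
by rewrite big_split /= -mulr_suml !sumC.
Qed.

Lemma ww_ok (a s : R) : let w := Complex a s in
  w * w = (2 * a)%:C * w - (a ^+ 2 + s ^+ 2)%:C.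
Proof. by apply/eqP; rewrite eq_complex /=; apply/andP; split; apply/eqP; ring. Qed.


Lemma qnorm2_eq0 (h : Q) : qnorm2 h = 0 -> h = qzero R.
Proof.
case: h => a b c d; rewrite /qnorm2 /= => H.
have Ha : 0 <= a ^+ 2 by exact: sqr_ge0.
have Hb : 0 <= b ^+ 2 by exact: sqr_ge0.
have Hc : 0 <= c ^+ 2 by exact: sqr_ge0.
have Hd : 0 <= d ^+ 2 by exact: sqr_ge0.
have -> : a = 0 by apply/eqP; rewrite -sqrf_eq0; apply/eqP; lra.
have -> : b = 0 by apply/eqP; rewrite -sqrf_eq0; apply/eqP; lra.
have -> : c = 0 by apply/eqP; rewrite -sqrf_eq0; apply/eqP; lra.
have -> : d = 0 by apply/eqP; rewrite -sqrf_eq0; apply/eqP; lra.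
by [].
Qed.

Lemma qnorm2_neq0 (h : Q) : h <> qzero R -> qnorm2 h != 0.
Proof. by move=> hn; apply/eqP => /qnorm2_eq0. Qed.

Lemma conj_back (x h : Q) : h <> qzero R -> qmul (qmul x h) (qinv h) = x.
Proof.
move=> /qnorm2_neq0; case: h => a b c d; case: x => x1 x2 x3 x4.
rewrite /qnorm2 /= => hn.
by apply: quat_eq; rewrite /qinv /qnorm2 /=; field.
Qed.

Lemma qnorm2M (x y : Q) : qnorm2 (qmul x y) = qnorm2 x * qnorm2 y.
Proof. by rewrite /qnorm2 /=; ring. Qed.

Lemma qnorm2V (h : Q) : h <> qzero R -> qnorm2 (qinv h) * qnorm2 h = 1.
Proof.
move=> /qnorm2_neq0; case: h => a b c d; rewrite /qinv /qnorm2 /= => hn.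
by field.
Qed.

Lemma qclass_inv (y x : Q) : qclass y x -> qa x = qa y /\ qnorm2 x = qnorm2 y.
Proof.
case=> h [hn ->]; split.
  move: (qnorm2_neq0 hn); case: h {hn} => a b c d; case: y => y1 y2 y3 y4.
  by rewrite /qinv /qnorm2 /= => hn; field.
rewrite !qnorm2M.
have := qnorm2V hn; set u := qnorm2 (qinv h); set v := qnorm2 h => huv.
by rewrite [v * _]mulrC -mulrA [v * _]mulrC huv mulr1.
Qed.

Lemma qclass_mem (x : Q) (a s : R) : qa x = a ->
  qb x ^+ 2 + qc x ^+ 2 + qd x ^+ 2 = s ^+ 2 -> qclass (Quat a s 0 0) x.
Proof.
case: x => x1 b c d /= <- hs.
case: (boolP ((b + s == 0) && (c == 0) && (d == 0))).
  case/andP=> [/andP [/eqP hb /eqP hc] /eqP hd].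
  have hb' : b = - s by rewrite -(subr0 b) -hb; ring.
  have j0 : Quat 0 0 1 0 <> qzero R by move=> /(congr1 (@qc R)) /= /eqP; rewrite oner_eq0.
  exists (Quat 0 0 1 0); split => //.
  rewrite -[in LHS](conj_back (Quat x1 b c d) (h := Quat 0 0 1 0)) //.
  by congr qmul; rewrite hb' hc hd; apply: quat_eq => /=; ring.
move=> hnz.
have hn : Quat 0 (b + s) c d <> qzero R.
move=> E; move: hnz; have /= -> := congr1 (@qb R) E.
by have /= -> := congr1 (@qc R) E; have /= -> := congr1 (@qd R) E; rewrite !eqxx.
exists (Quat 0 (b + s) c d); split => //.
rewrite -[in LHS](conj_back (Quat x1 b c d) hn); congr qmul.
apply: quat_eq => /=; last 3 first.
- ring.
- ring.
- ring.
transitivity (- ((b + s) * s) - (b ^+ 2 + c ^+ 2 + d ^+ 2 - s ^+ 2)).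
  ring.
by rewrite hs subrr subr0; ring.
Qed.


Lemma cplx0 (u v : R) : Complex u v = 0 <-> u = 0 /\ v = 0.
Proof.
split; last by case=> -> ->.
by move/eqP; rewrite eq_complex /= => /andP [/eqP -> /eqP ->].
Qed.

Lemma addmulC (g1 g2 e1 e2 u v : R) :
  Complex g1 g2 + Complex e1 e2 * Complex u v = Complex (g1 + (e1 * u - e2 * v)) (g2 + (e1 * v + e2 * u)).
Proof. by apply/eqP; rewrite eq_complex /=; apply/andP; split; apply/eqP; ring. Qed.

Lemma mulC (e1 e2 u v : R) :
  Complex e1 e2 * Complex u v = Complex (e1 * u - e2 * v) (e1 * v + e2 * u).
Proof. by apply/eqP; rewrite eq_complex /=; apply/andP; split; apply/eqP; ring. Qed.

Lemma qt1_qofC (z : R[i]) : qt1 (qofC z) = z. Proof. by case: z. Qed.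

Lemma sum_mul0 m (F : 'I_m -> R) : \sum_(i < m) F i * 0 = 0.
Proof. by rewrite big1 // => i _; rewrite mulr0. Qed.

Lemma evalB (cf : nat -> R[i]) n (x : Q) (s : R) :
  qb x ^+ 2 + qc x ^+ 2 + qd x ^+ 2 = s ^+ 2 ->
  let q := fun i => qofC (cf i) in
  let G := Gv q n (qa x) (qnorm2 x) in let D := Dv q n (qa x) (qnorm2 x) in
  let Gc := Complex (qa G) (qb G) in let Dc := Complex (qa D) (qb D) in
  (qeval q n x = qzero R <->
     (Gc + Dc * Complex (qa x) (qb x) = 0 /\ Dc * Complex (qc x) (qd x) = 0))
  /\ (forall s', s' ^+ 2 = s ^+ 2 ->
       \sum_(i < n.+1) cf i * (Complex (qa x) s') ^+ i = Gc + Dc * Complex (qa x) s').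
Proof.
move=> hs q G D Gc Dc; split.
  rewrite qevalE -/G -/D.
  have G3 : qc G = 0 by rewrite /= sum_mul0.
  have G4 : qd G = 0 by rewrite /= sum_mul0.
  have D3 : qc D = 0 by rewrite /= sum_mul0.
  have D4 : qd D = 0 by rewrite /= sum_mul0.
  rewrite /Gc /Dc addmulC mulC !cplx0.
  case: x hs G D Gc Dc G3 G4 D3 D4 => a b c d /= hs G D Gc Dc G3 G4 D3 D4.
  split.
    move=> E; have /= := congr1 (@qa R) E; have /= := congr1 (@qb R) E.
    have /= := congr1 (@qc R) E; have /= := congr1 (@qd R) E.
    rewrite G3 G4 D3 D4 => h4 h3 h2 h1.
    split; split; [rewrite -h1| rewrite -h2| rewrite -h3| rewrite -h4]; ring.
  case=> [[h1 h2] [h3 h4]]; apply: quat_eq; rewrite /= ?G3 ?G4 ?D3 ?D4.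
  - by apply: (etrans _ h1); ring.
  - by apply: (etrans _ h2); ring.
  - by apply: (etrans _ h3); ring.
  - by apply: (etrans _ h4); ring.
move=> s' hs'.
have ww : Complex (qa x) s' * Complex (qa x) s' =
          (2 * qa x)%:C * Complex (qa x) s' - (qnorm2 x)%:C.
  rewrite (_ : qnorm2 x = qa x ^+ 2 + s' ^+ 2); first exact: ww_ok.
  by rewrite hs' -hs /qnorm2; ring.
rewrite -(ceval1 q n ww).
by apply: eq_bigr => i _; rewrite /q qt1_qofC.
Qed.


Lemma sqr3_eq0 (b c d : R) : b ^+ 2 + c ^+ 2 + d ^+ 2 = 0 -> b = 0 /\ c = 0 /\ d = 0.
Proof.
move=> H.
have Hb : 0 <= b ^+ 2 by exact: sqr_ge0.
have Hc : 0 <= c ^+ 2 by exact: sqr_ge0.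
have Hd : 0 <= d ^+ 2 by exact: sqr_ge0.
split; first by apply/eqP; rewrite -sqrf_eq0; apply/eqP; lra.
split; first by apply/eqP; rewrite -sqrf_eq0; apply/eqP; lra.
by apply/eqP; rewrite -sqrf_eq0; apply/eqP; lra.
Qed.

Lemma partB :
  (forall (n : nat) (c : nat -> R[i]), c n != 0 ->
   forall (xs : seq R) (es zs : seq R[i]),
     uniq xs -> uniq (es ++ zs) -> all (fun z => complex.Im z != 0) (es ++ zs) ->
     (forall e, e \in es -> \sum_(i < n.+1) c i * (conjc e) ^+ i != 0) ->
     (forall z : R[i],
        \sum_(i < n.+1) c i * z ^+ i = 0 <->
        (z \in [seq r%:C%C | r <- xs] \/ z \in es \/ z \in zs \/ conjc z \in zs)) ->
     forall x : quat R,
       qeval (fun i => qofC (c i)) n x = qzero R <->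
       ((exists2 r, r \in xs & x = qofR r) \/
        (exists2 e, e \in es & x = qofC e) \/
        (exists2 z, z \in zs & qclass (qofC z) x))).
Proof.
move=> n cf _ xs es zs _ _ hall hes hroots x.
have imz z : z \in zs -> complex.Im z != 0.
  by move=> hz; have := allP hall z; rewrite mem_cat hz orbT => /(_ isT).
split.
  move=> E.
  case: (boolP ((qc x == 0) && (qd x == 0))).
    case/andP => /eqP hc /eqP hd.
    have hs : qb x ^+ 2 + qc x ^+ 2 + qd x ^+ 2 = qb x ^+ 2.
      by rewrite hc hd expr0n /= !addr0.
    have [hE hS] := evalB cf n hs.
    have p0 : \sum_(i < n.+1) cf i * (Complex (qa x) (qb x)) ^+ i = 0.
      by rewrite (hS (qb x) erefl); exact: (hE.1 E).1.
    have xE : x = Quat (qa x) (qb x) 0 0.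
      by move: hc hd; clear; case: x => /= ???? -> ->.
    case: ((hroots _).1 p0) => [/mapP [r hr e] | [he | [hz | hz]]].
    - left; exists r => //; rewrite xE; case: e => -> ->; by [].
    - by right; left; exists (Complex (qa x) (qb x)).
    - right; right; exists (Complex (qa x) (qb x)) => //=.
      by apply: qclass_mem => //; rewrite hc hd expr0n /= !addr0.
    - right; right; exists (conjc (Complex (qa x) (qb x))) => //=.
      by apply: qclass_mem => //; rewrite hc hd expr0n /= !addr0 sqrrN.
  move=> hcd.
  set s := Num.sqrt (qb x ^+ 2 + qc x ^+ 2 + qd x ^+ 2).
  have hs : qb x ^+ 2 + qc x ^+ 2 + qd x ^+ 2 = s ^+ 2.
    rewrite sqr_sqrtr //; apply: addr_ge0; [apply: addr_ge0|]; exact: sqr_ge0.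
  have [hE hS] := evalB cf n hs.
  move: hE hS; set Gc := Complex _ _; set Dc := Complex _ _ => hE hS.
  have [h1 h2] := hE.1 E.
  have Dc0 : Dc = 0.
    move/eqP: h2; rewrite mulf_eq0 => /orP [/eqP //|].
    move/eqP/cplx0 => [hc hd]; move: hcd; by rewrite hc hd !eqxx.
  have Gc0 : Gc = 0 by move: h1; rewrite Dc0 mul0r addr0.
  have pw : \sum_(i < n.+1) cf i * (Complex (qa x) s) ^+ i = 0.
    by rewrite hS // Dc0 Gc0 mul0r addr0.
  have pwc : \sum_(i < n.+1) cf i * (conjc (Complex (qa x) s)) ^+ i = 0.
    by rewrite /= hS ?sqrrN // Dc0 Gc0 mul0r addr0.
  case: ((hroots _).1 pw) => [/mapP [r hr e] | [he | [hz | hz]]].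
  - exfalso; case: e => _ s0.
    move: hs; rewrite s0 expr0n /= => /sqr3_eq0 [_ [hc hd]].
    by move: hcd; rewrite hc hd !eqxx.
  - by move: (hes _ he); rewrite pwc eqxx.
  - by right; right; exists (Complex (qa x) s) => //; apply: qclass_mem.
  - right; right; exists (conjc (Complex (qa x) s)) => //=.
    by apply: qclass_mem => //; rewrite sqrrN.
case => [[r hr ->] | [[e he ->] | [z hz hcl]]].
- have hs : qb (qofR r) ^+ 2 + qc (qofR r) ^+ 2 + qd (qofR r) ^+ 2 = 0 ^+ 2.
    by rewrite /= !expr2 !mulr0 !addr0.
  have [hE hS] := evalB cf n hs.
  apply/hE; split; last by rewrite /= mulr0.
  rewrite -(hS 0) //; apply/hroots; left; exact: (map_f (fun r => r%:C%C) hr).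
- have hs : qb (qofC e) ^+ 2 + qc (qofC e) ^+ 2 + qd (qofC e) ^+ 2 = (complex.Im e) ^+ 2.
    by rewrite /= expr0n /= !addr0.
  have [hE hS] := evalB cf n hs.
  apply/hE; split; last by rewrite /= mulr0.
  rewrite -(hS (complex.Im e)) //; apply/hroots; right; left.
  have eE : Complex (complex.Re e) (complex.Im e) = e by clear; case: e.
  by rewrite /= eE.
- have [ha hn] := qclass_inv hcl.
  have hs : qb x ^+ 2 + qc x ^+ 2 + qd x ^+ 2 = (complex.Im z) ^+ 2.
    move: hn ha; rewrite /qnorm2 /= => hn ha.
    by apply: (addrI (qa x ^+ 2)); rewrite !addrA hn ha expr0n /= !addr0.
  have [hE hS] := evalB cf n hs.
  move: hE hS; set Gc := Complex _ _; set Dc := Complex _ _ => hE hS.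
  have zE : Complex (qa x) (complex.Im z) = z by rewrite ha; case: z {hcl hs hz ha hn hE hS Gc Dc}.
  have pz : Gc + Dc * z = 0.
    by rewrite -zE -hS //; apply/hroots; right; right; left; rewrite zE.
  have pzc : Gc + Dc * conjc z = 0.
    rewrite -zE /= -hS ?sqrrN //; apply/hroots; right; right; right.
    by rewrite /= opprK zE.
  have Dc0 : Dc = 0.
    have : Dc * (z - conjc z) = 0.
      have -> : Dc * (z - conjc z) = (Gc + Dc * z) - (Gc + Dc * conjc z) by ring.
      by rewrite pz pzc subrr.
    move/eqP; rewrite mulf_eq0 => /orP [/eqP //|].
    have -> : z - conjc z = Complex 0 (complex.Im z + complex.Im z).
      by clear; case: z => u v; apply/eqP; rewrite eq_complex /=; apply/andP; split; apply/eqP; ring.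
    move=> /eqP/cplx0 [_ him].
    by move: (imz z hz); rewrite (_ : complex.Im z = 0) ?eqxx //; lra.
  apply/hE; rewrite Dc0 !mul0r addr0; split => //.
  by move: pz; rewrite Dc0 mul0r addr0.
Qed.


Lemma partA :
  (forall (n : nat) (q : nat -> R), q n != 0 ->
   forall (xs : seq R) (zs : seq R[i]),
     uniq xs -> uniq zs -> all (fun z => complex.Im z != 0) zs ->
     (forall z : R[i],
        \sum_(i < n.+1) (q i)%:C%C * z ^+ i = 0 <->
        (z \in [seq r%:C%C | r <- xs] \/ z \in zs \/ conjc z \in zs)) ->
     forall x : quat R,
       qeval (fun i => qofR (q i)) n x = qzero R <->
       ((exists2 r, r \in xs & x = qofR r) \/
        (exists2 z, z \in zs & qclass (qofC z) x))).
Proof.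
move=> n q qn xs zs ux uz hall hroots x.
have qn' : (q n)%:C != 0.
  by apply: contra qn => /eqP h; apply/eqP; exact: (complexI h).
have hr' : forall z : R[i], \sum_(i < n.+1) (q i)%:C * z ^+ i = 0 <->
        (z \in [seq r%:C%C | r <- xs] \/ z \in [::] \/ z \in zs \/ conjc z \in zs).
  move=> z; rewrite hroots; split.
    by case=> [h|[h|h]]; [left|right;right;left|right;right;right].
  by case=> [h|[//|[h|h]]]; [left|right;left|right;right].
have := @partB n (fun i => (q i)%:C) qn' xs [::] zs ux uz hall (fun e (he : e \in [::]) => False_ind _ (notF he)) hr' x.
change (qeval (fun i => qofC (q i)%:C) n x) with (qeval (fun i => qofR (q i)) n x).
move=> ->; split.
  by case=> [h|[[e //]|h]]; [left|right].
by case=> [h|h]; [left|right;right].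
Qed.


Lemma Fkey (G D x : Q) (s : R) :
  qb x ^+ 2 + qc x ^+ 2 + qd x ^+ 2 = s ^+ 2 ->
  qadd G (qmul D x) = qzero R ->
  let w := Complex (qa x) s in
  (Complex (qa G) (qb G) + Complex (qa D) (qb D) * w) *
     conjc (Complex (qa G) (qb G) + Complex (qa D) (qb D) * Complex (qa x) (- s)) +
  (Complex (qc G) (qd G) + Complex (qc D) (qd D) * w) *
     conjc (Complex (qc G) (qd G) + Complex (qc D) (qd D) * Complex (qa x) (- s)) = 0.
Proof.
case: G D x => g1 g2 g3 g4 [e1 e2 e3 e4] [a b c d] /= hs E.
have h1 := congr1 (@qa R) E; have h2 := congr1 (@qb R) E.
have h3 := congr1 (@qc R) E; have h4 := congr1 (@qd R) E.
move: h1 h2 h3 h4 => /= h1 h2 h3 h4.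
have -> : g1 = - (e1 * a - e2 * b - e3 * c - e4 * d)
  by rewrite -[g1](addrK (e1 * a - e2 * b - e3 * c - e4 * d)) h1 sub0r.
have -> : g2 = - (e1 * b + e2 * a + e3 * d - e4 * c)
  by rewrite -[g2](addrK (e1 * b + e2 * a + e3 * d - e4 * c)) h2 sub0r.
have -> : g3 = - (e1 * c - e2 * d + e3 * a + e4 * b)
  by rewrite -[g3](addrK (e1 * c - e2 * d + e3 * a + e4 * b)) h3 sub0r.
have -> : g4 = - (e1 * d + e2 * c - e3 * b + e4 * a)
  by rewrite -[g4](addrK (e1 * d + e2 * c - e3 * b + e4 * a)) h4 sub0r.
apply/eqP; rewrite eq_complex /=; apply/andP; split; apply/eqP.
  transitivity ((e1 ^+ 2 + e2 ^+ 2 + e3 ^+ 2 + e4 ^+ 2) * (b ^+ 2 + c ^+ 2 + d ^+ 2 - s ^+ 2)).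
    ring.
  by rewrite hs subrr mulr0.
ring.
Qed.


Lemma two_pts (Gc Dc : R[i]) a s : s != 0 ->
  Gc + Dc * Complex a s = 0 -> Gc + Dc * Complex a (- s) = 0 -> Gc = 0 /\ Dc = 0.
Proof.
move=> s0 h1 h2.
have : Dc * Complex 0 (s + s) = 0.
  have -> : Complex 0 (s + s) = Complex a s - Complex a (- s).
    by apply/eqP; rewrite eq_complex /=; apply/andP; split; apply/eqP; ring.
  have -> : Dc * (Complex a s - Complex a (- s)) =
            (Gc + Dc * Complex a s) - (Gc + Dc * Complex a (- s)) by ring.
  by rewrite h1 h2 subrr.
move/eqP; rewrite mulf_eq0 => /orP [/eqP Dc0|/eqP hc].
  by split => //; move: h1; rewrite Dc0 mul0r addr0.
have [_ hs] := (cplx0 _ _).1 hc.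
by exfalso; move: s0; rewrite (_ : s = 0) ?eqxx //; lra.
Qed.

Lemma sphere_inf (a s : R) (L : seq Q) : s != 0 ->
  ~ (forall x, qa x = a -> qnorm2 x = a ^+ 2 + s ^+ 2 -> x \in L).
Proof.
move=> s0 H.
have pos (t : nat) : (1 + t%:R ^+ 2 : R) != 0.
  have := sqr_ge0 (t%:R : R); move=> h; apply/eqP => h'; lra.
pose xt (t : nat) := Quat a (s * (2 / (1 + t%:R ^+ 2) - 1)) (s * (2 * t%:R / (1 + t%:R ^+ 2))) 0.
have nx t : qnorm2 (xt t) = a ^+ 2 + s ^+ 2.
  by have := pos t; rewrite /qnorm2 /= => pt; field.
have two0 : (2 : R) != 0 by apply/eqP => h; lra.
have inj : injective xt.
  move=> t1 t2 /(congr1 (@qb R)) /= /(mulfI s0) /addIr /(mulfI two0) /invr_inj /addrI.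
  rewrite -!natrX => /eqP; rewrite eqr_nat eqn_exp2r // => /eqP //.
have := @uniq_leq_size _ [seq xt t | t <- iota 0 (size L).+1] L.
rewrite map_inj_uniq // iota_uniq size_map size_iota ltnn => /(_ isT) h.
suff : false by []; apply: h.
by move=> y /mapP [t _ ->]; apply: H.
Qed.


Definition qq (p : nat -> Q) (d0 : R) := fun i => if i == 0%N then qofR d0 else p i.

Lemma f1E (p : nat -> Q) n (d0 : R) (w : R[i]) : (derf1 p n d0).[w] = \sum_(i < n.+1) qt1 (qq p d0 i) * w ^+ i.
Proof. rewrite /derf1 horner_poly; apply: eq_bigr => i _; rewrite /qq; by case: (_ == _). Qed.

Lemma f2E (p : nat -> Q) n (w : R[i]) : (derf2 p n).[w] = \sum_(i < n.+1) qt2 (qq p 0 i) * w ^+ i.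
Proof. rewrite /derf2 horner_poly; apply: eq_bigr => i _; rewrite /qq; by case: (_ == _). Qed.

Lemma f2E' (p : nat -> Q) n (d0 : R) (w : R[i]) : (derf2 p n).[w] = \sum_(i < n.+1) qt2 (qq p d0 i) * w ^+ i.
Proof. rewrite /derf2 horner_poly; apply: eq_bigr => i _; rewrite /qq; by case: (_ == _). Qed.

Lemma f1bE (p : nat -> Q) n (d0 : R) (w : R[i]) : (derf1bar p n d0).[w] = conjc ((derf1 p n d0).[conjc w]).
Proof.
rewrite /derf1bar /derf1 !horner_poly rmorph_sum; apply: eq_bigr => i _.
rewrite rmorphM rmorphXn /= conjcK; case: (_ == _) => //; by rewrite conjc_real.
Qed.

Lemma f2bE (p : nat -> Q) n (w : R[i]) : (derf2bar p n).[w] = conjc ((derf2 p n).[conjc w]).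
Proof.
rewrite /derf2bar /derf2 !horner_poly rmorph_sum; apply: eq_bigr => i _.
rewrite rmorphM rmorphXn /= conjcK; case: (_ == _) => //; by rewrite conjc0 mul0r.
Qed.

Definition Bad (p : nat -> Q) n (d0 : R) (c : R[i]) :=
  (derf1 p n d0).[c] = 0 /\ (derf2 p n).[c] = 0 /\
  (derf1 p n d0).[conjc c] = 0 /\ (derf2 p n).[conjc c] = 0.

Lemma root_g (p : nat -> Q) n (d0 : R) (c : R[i]) :
  root (gcdp (gcdp (derf1 p n d0) (derf2 p n)) (gcdp (derf1bar p n d0) (derf2bar p n))) c
  <-> Bad p n d0 c.
Proof.
rewrite !root_gcd /root f1bE f2bE !conjc_eq0 /Bad.
split; first by move=> /andP [/andP [/eqP -> /eqP ->] /andP [/eqP -> /eqP ->]].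
by case=> [-> [-> [-> ->]]]; rewrite eqxx.
Qed.

Lemma root_g12 (p : nat -> Q) n (d0 : R) (c : R[i]) :
  root (gcdp (derf1 p n d0) (derf2 p n)) c <->
  (derf1 p n d0).[c] = 0 /\ (derf2 p n).[c] = 0.
Proof.
rewrite root_gcd /root; split; first by move=> /andP [/eqP -> /eqP ->].
by case=> [-> ->]; rewrite eqxx.
Qed.

Lemma evalC (p : nat -> Q) n (d0 a s s' : R) : s' ^+ 2 = s ^+ 2 ->
  let G := Gv (qq p d0) n a (a ^+ 2 + s ^+ 2) in
  let D := Dv (qq p d0) n a (a ^+ 2 + s ^+ 2) in
  (derf1 p n d0).[Complex a s'] = Complex (qa G) (qb G) + Complex (qa D) (qb D) * Complex a s'
  /\ (derf2 p n).[Complex a s'] = Complex (qc G) (qd G) + Complex (qc D) (qd D) * Complex a s'.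
Proof.
move=> hs' G D.
have ww : Complex a s' * Complex a s' = (2 * a)%:C * Complex a s' - (a ^+ 2 + s ^+ 2)%:C.
  by rewrite -hs'; exact: ww_ok.
split; first by rewrite f1E; exact: ceval1.
by rewrite (f2E' _ _ d0); exact: ceval2.
Qed.

Lemma bad_GD (p : nat -> Q) n (d0 a s : R) : s != 0 -> Bad p n d0 (Complex a s) ->
  Gv (qq p d0) n a (a ^+ 2 + s ^+ 2) = qzero R /\ Dv (qq p d0) n a (a ^+ 2 + s ^+ 2) = qzero R.
Proof.
move=> s0 [h1 [h2 [h3 h4]]].
have [e1 e2] := evalC p n d0 a (erefl (s ^+ 2)).
have [e3 e4] := evalC p n d0 a (sqrrN s).
move: h3 h4; rewrite /= e3 e4 => h3 h4; move: h1 h2; rewrite e1 e2 => h1 h2.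
have [/cplx0 [g1 g2] /cplx0 [k1 k2]] := two_pts s0 h1 h3.
have [/cplx0 [g3 g4] /cplx0 [k3 k4]] := two_pts s0 h2 h4.
by split; apply: quat_eq.
Qed.

Lemma GD_bad (p : nat -> Q) n (d0 a s : R) :
  Gv (qq p d0) n a (a ^+ 2 + s ^+ 2) = qzero R -> Dv (qq p d0) n a (a ^+ 2 + s ^+ 2) = qzero R ->
  Bad p n d0 (Complex a s).
Proof.
move=> hG hD.
have [e1 e2] := evalC p n d0 a (erefl (s ^+ 2)).
have [e3 e4] := evalC p n d0 a (sqrrN s).
rewrite /Bad /= e1 e2 e3 e4 hG hD /= !addmulC.
by split; [|split; [|split]]; apply/cplx0; split; ring.
Qed.


Lemma coef_big (P Q : {poly R[i]}) n : (forall k, (n < k)%N -> P`_k = 0) ->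
  (forall k, (n < k)%N -> Q`_k = 0) -> (P * Q)`_(n + n) = P`_n * Q`_n.
Proof.
move=> hP hQ.
have hn : (n < (n + n).+1)%N by lia.
rewrite coefM (bigD1 (Ordinal hn)) //= addnK big1 ?addr0 // => j hj.
case: (ltngtP j n) => h.
- by rewrite hQ ?mulr0 //; lia.
- by rewrite hP ?mul0r.
- by move/eqP: hj => hj; exfalso; apply: hj; apply: val_inj.
Qed.

Lemma mulconj (u v : R) : Complex u v * conjc (Complex u v) = Complex (u ^+ 2 + v ^+ 2) 0.
Proof. by apply/eqP; rewrite eq_complex /=; apply/andP; split; apply/eqP; ring. Qed.

Lemma F_neq0 (p : nat -> Q) n (d0 : R) : (0 < n)%N -> p n <> qzero R ->
  derf1 p n d0 * derf1bar p n d0 + derf2 p n * derf2bar p n != 0.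
Proof.
move=> n0 pn; apply/eqP => /(congr1 (fun P : {poly R[i]} => P`_(n + n))).
have hk (E : nat -> R[i]) k : (n < k)%N -> (\poly_(i < n.+1) E i)`_k = 0.
  by move=> h; rewrite coef_poly ltnS leqNgt h.
rewrite coefD !coef_big; try (by move=> k; apply: hk).
rewrite coef0 !coef_poly ltnSn eqn0Ngt n0 /= !mulconj.
move=> /eqP; rewrite eq_complex /= => /andP [/eqP h _].
apply: pn; apply: qnorm2_eq0; rewrite /qnorm2 -h; ring.
Qed.

Definition qopp (x : Q) : Q := Quat (- qa x) (- qb x) (- qc x) (- qd x).

Lemma solve_x (G D x : Q) : D <> qzero R -> qadd G (qmul D x) = qzero R ->
  x = qopp (qmul (qinv D) G).
Proof.
move=> /qnorm2_neq0; case: G D x => g1 g2 g3 g4 [e1 e2 e3 e4] [a b c d] /= hn E.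
have h1 := congr1 (@qa R) E; have h2 := congr1 (@qb R) E.
have h3 := congr1 (@qc R) E; have h4 := congr1 (@qd R) E.
move: h1 h2 h3 h4 => /= h1 h2 h3 h4.
have -> : g1 = - (e1 * a - e2 * b - e3 * c - e4 * d).
  by rewrite -[g1](addrK (e1 * a - e2 * b - e3 * c - e4 * d)) h1 sub0r.
have -> : g2 = - (e1 * b + e2 * a + e3 * d - e4 * c).
  by rewrite -[g2](addrK (e1 * b + e2 * a + e3 * d - e4 * c)) h2 sub0r.
have -> : g3 = - (e1 * c - e2 * d + e3 * a + e4 * b).
  by rewrite -[g3](addrK (e1 * c - e2 * d + e3 * a + e4 * b)) h3 sub0r.
have -> : g4 = - (e1 * d + e2 * c - e3 * b + e4 * a).
  by rewrite -[g4](addrK (e1 * d + e2 * c - e3 * b + e4 * a)) h4 sub0r.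
move: hn; rewrite /qnorm2 /= => hn.
by apply: quat_eq; rewrite /qinv /qnorm2 /=; field.
Qed.

Lemma partC :
  (forall (n : nat) (p : nat -> quat R) (d0 : R),
     (1 <= n)%N -> p n <> qzero R -> (d0 = 0 \/ d0 = 1) ->
     let eqn := qeval (fun i => if i == 0%N then qofR d0 else p i) n in
     let g := gcdp (gcdp (derf1 p n d0) (derf2 p n))
                   (gcdp (derf1bar p n d0) (derf2bar p n)) in
     let g12 := gcdp (derf1 p n d0) (derf2 p n) in
     ((exists s : seq (quat R), forall x, eqn x = qzero R -> x \in s) <->
      (forall c : R[i], root g c -> complex.Im c = 0))
     /\
     ((forall c : R[i], root g c -> complex.Im c = 0) <->
      ~ (exists c : R[i], complex.Im c != 0 /\ root g12 c /\ root g12 (conjc c)))).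
Proof.
move=> n p d0 n1 pn _ eqn g g12.
have rg c : root g c <-> Bad p n d0 c by exact: root_g.
have r12 c : root g12 c <-> (derf1 p n d0).[c] = 0 /\ (derf2 p n).[c] = 0 by exact: root_g12.
split; last first.
  split.
    move=> H [c [hc [h1 h2]]].
    have [a1 a2] := (r12 c).1 h1; have [b1 b2] := (r12 _).1 h2.
    have : root g c by apply/rg.
    by move/H => him; rewrite him eqxx in hc.
  move=> H c /rg [b1 [b2 [b3 b4]]]; case: (eqVneq (complex.Im c) 0) => // hc.
  by exfalso; apply: H; exists c; split => //; split; apply/r12.
split.
  case=> L hL c /rg; case: c => a s hb /=; case: (eqVneq s 0) => // s0; exfalso.
  have [hG hD] := bad_GD s0 hb.
  apply: (sphere_inf (a := a) (s := s) (L := L) s0) => x hx hN; apply: hL.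
  change (qeval (qq p d0) n x = qzero R).
  rewrite qevalE hx hN hG hD; apply: quat_eq => /=; ring.
move=> H.
have F0 := F_neq0 d0 n1 pn.
set F := _ + _ in F0.
have [rs hrs] := closed_field_poly_normal F.
have rootF c : root F c -> c \in rs.
  have hl : lead_coef F != 0 by rewrite lead_coef_eq0.
  by move=> hc; rewrite -root_prod_XsubC -(rootZ _ _ hl) -hrs.
pose xsol (r : R[i]) := qopp (qmul (qinv (Dv (qq p d0) n (complex.Re r) (complex.Re r ^+ 2 + complex.Im r ^+ 2)))
                                  (Gv (qq p d0) n (complex.Re r) (complex.Re r ^+ 2 + complex.Im r ^+ 2))).
exists ([seq qofR (complex.Re r) | r <- rs] ++ [seq xsol r | r <- rs]).
move=> x E; change (qeval (qq p d0) n x = qzero R) in E.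
move: E; rewrite qevalE => E.
set s := Num.sqrt (qb x ^+ 2 + qc x ^+ 2 + qd x ^+ 2).
have hs : qb x ^+ 2 + qc x ^+ 2 + qd x ^+ 2 = s ^+ 2.
  rewrite sqr_sqrtr //; apply: addr_ge0; [apply: addr_ge0|]; exact: sqr_ge0.
have hN : qnorm2 x = qa x ^+ 2 + s ^+ 2 by rewrite /qnorm2 -hs; ring.
have Fc : root F (Complex (qa x) s).
  rewrite /root /F hornerD !hornerM f1bE f2bE.
  rewrite (_ : conjc (Complex (qa x) s) = Complex (qa x) (- s)) //.
  have [e1 e2] := evalC p n d0 (qa x) (erefl (s ^+ 2)).
  have [e3 e4] := evalC p n d0 (qa x) (sqrrN s).
  rewrite e1 e2 e3 e4 -hN; apply/eqP; exact: (Fkey hs E).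
have c0in := rootF _ Fc.
rewrite hN in E.
set G := Gv _ _ _ _ in E; set D := Dv _ _ _ _ in E.
case: (eqVneq D (qzero R)) => hD.
  have hG : G = qzero R.
    by rewrite -E hD; apply: quat_eq; rewrite /=; ring.
  case: (eqVneq s 0) => s0.
    have [hb [hc hd]] : qb x = 0 /\ qc x = 0 /\ qd x = 0.
      by apply: sqr3_eq0; rewrite hs s0 expr0n.
    rewrite mem_cat; apply/orP; left; apply/mapP; exists (Complex (qa x) s) => //=.
    by apply: quat_eq; rewrite /= ?hb ?hc ?hd.
  exfalso; move: s0; rewrite (_ : s = complex.Im (Complex (qa x) s)) //.
  by rewrite (H (Complex (qa x) s)) ?eqxx //; apply/rg; apply: GD_bad.
rewrite mem_cat; apply/orP; right; apply/mapP; exists (Complex (qa x) s) => //=.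
by rewrite /xsol /=; apply: (solve_x (G := G) (D := D)) => //; apply/eqP.
Qed.


End Q.

Unset Implicit Arguments.
Local Close Scope complex_scope.

Theorem corollary3 (R : realType) :
  (* (a) real coefficients *)
  (forall (n : nat) (q : nat -> R), q n != 0 ->
   forall (xs : seq R) (zs : seq R[i]),
     uniq xs -> uniq zs -> all (fun z => complex.Im z != 0) zs ->
     (forall z : R[i],
        \sum_(i < n.+1) (q i)%:C%C * z ^+ i = 0 <->
        (z \in [seq r%:C%C | r <- xs] \/ z \in zs \/ conjc z \in zs)) ->
     forall x : quat R,
       qeval (fun i => qofR (q i)) n x = qzero R <->
       ((exists2 r, r \in xs & x = qofR r) \/
        (exists2 z, z \in zs & qclass (qofC z) x)))
  /\
  (* (b) complex coefficients *)
  (forall (n : nat) (c : nat -> R[i]), c n != 0 ->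
   forall (xs : seq R) (es zs : seq R[i]),
     uniq xs -> uniq (es ++ zs) -> all (fun z => complex.Im z != 0) (es ++ zs) ->
     (forall e, e \in es -> \sum_(i < n.+1) c i * (conjc e) ^+ i != 0) ->
     (forall z : R[i],
        \sum_(i < n.+1) c i * z ^+ i = 0 <->
        (z \in [seq r%:C%C | r <- xs] \/ z \in es \/ z \in zs \/ conjc z \in zs)) ->
     forall x : quat R,
       qeval (fun i => qofC (c i)) n x = qzero R <->
       ((exists2 r, r \in xs & x = qofR r) \/
        (exists2 e, e \in es & x = qofC e) \/
        (exists2 z, z \in zs & qclass (qofC z) x)))
  /\
  (* (c) finiteness criterion *)
  (forall (n : nat) (p : nat -> quat R) (d0 : R),
     (1 <= n)%N -> p n <> qzero R -> (d0 = 0 \/ d0 = 1) ->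
     let eqn := qeval (fun i => if i == 0%N then qofR d0 else p i) n in
     let g := gcdp (gcdp (derf1 p n d0) (derf2 p n))
                   (gcdp (derf1bar p n d0) (derf2bar p n)) in
     let g12 := gcdp (derf1 p n d0) (derf2 p n) in
     ((exists s : seq (quat R), forall x, eqn x = qzero R -> x \in s) <->
      (forall c : R[i], root g c -> complex.Im c = 0))
     /\
     ((forall c : R[i], root g c -> complex.Im c = 0) <->
      ~ (exists c : R[i], complex.Im c != 0 /\ root g12 c /\ root g12 (conjc c)))).
Proof.
split; first exact: partA.
split; first exact: partB.
exact: partC.
Qed.
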